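(* Let $n_\text{in}\ge1$, $\mathbf{W}\in\mathbb{R}^{2\times n_\text{in}}$ with rows $\mathbf{W}_{1,:},\mathbf{W}_{2,:}$, $\mathbf{b}\in\mathbb{R}^{2}$, $\mathbf{c}\in\mathbb{R}^{n_\text{in}}$, $\mathbf{U}=[\mathbf{u}_1\,\ldots\,\mathbf{u}_{n_\text{in}}]\in\mathbb{R}^{n_\text{in}\times n_\text{in}}$, and $\mathcal{P}(\mathbf{U})=\{\mathbf{c}+\sum_j\lambda_j\mathbf{u}_j:\lambda\in[0,1]^{n_\text{in}}\}$. For $i\ge1$, let $N=2^i$ and partition $\mathcal{P}(\mathbf{U})$ (obtained by $i$ rounds of bisecting every cell along $\mathbf{u}_1$ with ratio $r=\tfrac12$) into the cells $\mathcal{P}_k=\{\mathbf{c}+\tfrac{k}{N}\mathbf{u}_1+\lambda_1\tfrac1N\mathbf{u}_1+\sum_{j\ge2}\lambda_j\mathbf{u}_j:\lambda\in[0,1]^{n_\text{in}}\}$, $k=0,\ldots,N-1$. Let $\mathcal{P}(\mathbf{V})$ and $\mathcal{P}(\mathbf{V}_k)$ be the images of $\mathcal{P}(\mathbf{U})$ and $\mathcal{P}_k$ under $\mathbf{x}\mapsto\mathbf{W}\mathbf{x}+\mathbf{b}$, and let $R_i=\mathrm{Vol}(\mathcal{B}(\mathbf{V}))-\mathrm{Vol}\big(\bigcup_{k=0}^{N-1}\mathcal{B}(\mathbf{V}_k)\big)$. Then \[ \lim_{i\to\infty}R_i=|\mathbf{W}_{1,:}\mathbf{u}_1|\,|\mathbf{W}_{2,:}\mathbf{u}_1|.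 \]
   Context: For a parallelotope $\mathcal{P}\subset\mathbb{R}^{2}$, $\mathcal{B}(\cdot)$ denotes the smallest axis-aligned rectangle containing it (the Cartesian product over coordinates of the interval between the minimal and maximal coordinate of its vertices); $\mathrm{Vol}$ is Lebesgue area. *)

(* Defs.v *)
From HB Require Import structures.
From mathcomp Require Import all_boot all_order all_algebra.
From mathcomp Require Import all_classical all_reals all_analysis.
Set Implicit Arguments. Unset Strict Implicit. Unset Printing Implicit Defensive.
Import Order.TTheory GRing.Theory Num.Theory.
Local Open Scope classical_set_scope.
Local Open Scope ring_scope.

Definition parallelotope (R : realType) (d m : nat) (c : 'cV[R]_d) (G : 'M[R]_(d, m))
  : set 'cV[R]_d :=
  [set c + G *m lam | lam in [set lam : 'cV[R]_m | forall j, 0 <= lam j ord0 <= 1]].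

Definition pvertices (R : realType) (d m : nat) (c : 'cV[R]_d) (G : 'M[R]_(d, m))
  : set 'cV[R]_d :=
  [set c + G *m lam | lam in [set lam : 'cV[R]_m | forall j, lam j ord0 = 0 \/ lam j ord0 = 1]].

Definition bbox (R : realType) (m : nat) (c : 'cV[R]_2) (G : 'M[R]_(2, m)) : set (R * R) :=
  let X1 := [set v ord0 ord0 | v in pvertices c G] in
  let X2 := [set v ord_max ord0 | v in pvertices c G] in
  [set p : R * R | (inf X1 <= p.1 <= sup X1) /\ (inf X2 <= p.2 <= sup X2)].

Definition area (R : realType) : set (R * R) -> \bar R :=
  (@lebesgue_measure R \x @lebesgue_measure R)%E.

(* The k-th cell P_k after i bisections along u_1 (N = 2^i cells):
   offset c + (k/N) u_1, generators (u_1/N, u_2, ..., u_n). *)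
Definition cell_off (R : realType) (n : nat) (c : 'cV[R]_n.+1) (U : 'M[R]_n.+1)
  (N k : nat) : 'cV[R]_n.+1 :=
  c + (k%:R / N%:R) *: col ord0 U.
Definition cell_gen (R : realType) (n : nat) (U : 'M[R]_n.+1) (N : nat) : 'M[R]_n.+1 :=
  \matrix_(a, j) (if j == ord0 then U a j / N%:R else U a j).

(* R_i = Vol(B(V)) - Vol(\bigcup_k B(V_k)), where V = W U with offset W c + b is the
   image of P(U) under x |-> W x + b, and V_k likewise for P_k. *)
Definition Rgap (R : realType) (n : nat) (W : 'M[R]_(2, n.+1)) (b : 'cV[R]_2)
  (c : 'cV[R]_n.+1) (U : 'M[R]_n.+1) (i : nat) : \bar R :=
  let N := (2 ^ i)%N in
  (area (bbox (W *m c + b) (W *m U))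
   - area (\bigcup_(k < N) bbox (W *m cell_off c U N k + b) (W *m cell_gen U N)))%E.

(* Main.v *)
Require Import Defs.
From HB Require Import structures.
From mathcomp Require Import all_boot all_order all_algebra.
From mathcomp Require Import all_classical all_reals all_analysis.
From mathcomp Require Import ring lra.
Import Order.TTheory GRing.Theory Num.Theory.
Import numFieldNormedType.Exports.
Local Open Scope classical_set_scope.
Local Open Scope ring_scope.

Section S.
Variable R : realType.

Lemma leb_itv (a b : R) : a <= b -> lebesgue_measure `[a, b]%classic = (b - a)%:E.
Proof.
move=> ab; rewrite lebesgue_measure_itv /= lte_fin.
case: ltP => // h; have -> : b = a by apply/eqP; rewrite eq_le ab h.
by rewrite subrr.
Qed.

Lemma area_rect (a b c d : R) : a <= b -> c <= d ->
  area (`[a, b]%classic `*` `[c, d]%classic) = ((b - a) * (d - c))%:E.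
Proof.
move=> ab cd; rewrite /area product_measure1E; try exact: measurable_itv.
rewrite EFinM; congr (_ * _)%E; [exact: leb_itv | exact: leb_itv].
Qed.


Lemma area_setU (A B : set (measurableTypeR R * measurableTypeR R)%type) : measurable A -> measurable B ->
  (area B < +oo)%E -> area (A `|` B) = (area A + area B - area (A `&` B))%E.
Proof. exact: measureUfinr. Qed.

Definition hp (x : R) := if 0 <= x then x else 0.
Definition hn (x : R) := if 0 <= x then 0 else x.
Lemma hpn (x : R) : hp x - hn x = `|x|.
Proof. rewrite /hp /hn; case: ifP => h; [rewrite subr0 ger0_norm //|].
by rewrite sub0r ltr0_norm // ltNge h. Qed.

Definition I1 (x0 a w t : R) : set R := `[x0 + t * a, x0 + t * a + w]%classic.

Lemma I1_conv x0 a w s t u : s <= t -> t <= u ->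
  I1 x0 a w s `&` I1 x0 a w u `<=` I1 x0 a w t.
Proof.
rewrite /I1 => st tu x [] /=; rewrite !in_itv /= => /andP[h1 h2] /andP[h3 h4].
apply/andP; split.
- case: (lerP 0 a) => ha; first by nra.
  by nra.
- case: (lerP 0 a) => ha; by nra.
Qed.

Lemma I1_inter x0 a w t : `|a| <= w ->
  I1 x0 a w t `&` I1 x0 a w (t + 1) =
  `[x0 + t * a + hp a, x0 + t * a + hp a + (w - `|a|)]%classic.
Proof.
move=> aw; rewrite /I1 /hp; apply/seteqP; split => x /=; rewrite !in_itv /=.
- case=> /andP[h1 h2] /andP[h3 h4]; case: ifP => ha.
    by rewrite ger0_norm // in aw *; apply/andP; split; nra.
  by move/negbT: ha; rewrite -ltNge => ha; rewrite ltr0_norm // in aw *; apply/andP; split; nra.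
- case: ifP => ha.
    by rewrite ger0_norm // in aw * => /andP[h1 h2]; split; apply/andP; split; nra.
  by move/negbT: ha; rewrite -ltNge => ha; rewrite ltr0_norm // in aw * => /andP[h1 h2]; split; apply/andP; split; nra.
Qed.

Definition box x0 a w y0 b h (j : nat) : set (R * R) :=
  I1 x0 a w j%:R `*` I1 y0 b h j%:R.

Lemma stair x0 a w y0 b h k : `|a| <= w -> `|b| <= h ->
  area (\bigcup_(j < k.+1) box x0 a w y0 b h j) =
  (w * h + k%:R * (w * h - (w - `|a|) * (h - `|b|)))%:E.
Proof.
move=> aw bh.
have w0 : 0 <= w by apply: le_trans aw.
have h0 : 0 <= h by apply: le_trans bh.
have mbox : forall j, measurable (box x0 a w y0 b h j).
  by move=> j; apply: measurableX; exact: measurable_itv.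
have abox : forall j, area (box x0 a w y0 b h j) = (w * h)%:E.
  move=> j; rewrite /box /I1 area_rect; first by congr (_%:E); ring.
    by rewrite lerDl.
  by rewrite lerDl.
elim: k => [|k IH].
  rewrite bigcup_mkord big_ord1 abox.
  by congr (_%:E); ring.
have mU : measurable (\bigcup_(j < k.+1) box x0 a w y0 b h j).
  by rewrite bigcup_mkord; apply: bigsetU_measurable => i _; exact: mbox.
rewrite bigcup_mkord big_ord_recr /= -bigcup_mkord area_setU //; [|exact: mbox|by rewrite abox ltry].
have -> : \bigcup_(j < k.+1) box x0 a w y0 b h j `&` box x0 a w y0 b h k.+1 =
    box x0 a w y0 b h k `&` box x0 a w y0 b h k.+1.
  apply/seteqP; split => p.
  - case=> [[j /= jk]] Bj Bk; split => //.
    case: Bj Bk => /= Hj1 Hj2 [Hk1 Hk2]; split.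
    + apply: (@I1_conv _ _ _ j%:R k%:R k.+1%:R); rewrite ?ler_nat //; by [split].
    + apply: (@I1_conv _ _ _ j%:R k%:R k.+1%:R); rewrite ?ler_nat //; by [split].
  - case=> Bk Bk1; split => //; exists k => //=.
rewrite IH abox /box -setXI -natr1 !I1_inter // area_rect ?lerDl ?subr_ge0 //.
rewrite -EFinD -?EFinB; congr (_%:E); ring.
Qed.

Lemma sup_max (E : set R) m : E m -> ubound E m -> sup E = m.
Proof.
move=> Em ub; apply/eqP; rewrite eq_le; apply/andP; split.
  by apply: ge_sup => //; exists m.
by apply: ub_le_sup => //; exists m.
Qed.

Lemma inf_min (E : set R) m : E m -> lbound E m -> inf E = m.
Proof.
move=> Em lb; rewrite /inf (@sup_max _ (- m)) ?opprK //.
by move=> y [x Ex <-]; rewrite lerN2; apply: lb.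
Qed.

Lemma vert_entry m (o : 'cV[R]_2) (G : 'M[R]_(2, m)) lam r :
  (o + G *m lam) r ord0 = o r ord0 + \sum_j G r j * lam j ord0.
Proof. by rewrite !mxE. Qed.

Lemma vert_sup m (o : 'cV[R]_2) (G : 'M[R]_(2, m)) r :
  sup [set v r ord0 | v in pvertices o G] = o r ord0 + \sum_j hp (G r j).
Proof.
apply: sup_max.
  exists (o + G *m \col_j (if 0 <= G r j then 1 else 0)).
    exists (\col_j (if 0 <= G r j then 1 else 0)) => //= j.
    by rewrite mxE; case: ifP => _; [right|left].
  rewrite vert_entry; congr (_ + _); apply: eq_bigr => j _.
  by rewrite mxE /hp; case: ifP => _; rewrite ?mulr1 ?mulr0.
move=> y [v [lam Hlam <-] <-]; rewrite vert_entry lerD2l.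
apply: ler_sum => j _; rewrite /hp.
case: (Hlam j) => ->; rewrite ?mulr0 ?mulr1; case: ifP => //.
  by move/negbT; rewrite -ltNge => /ltW.
Qed.

Lemma vert_inf m (o : 'cV[R]_2) (G : 'M[R]_(2, m)) r :
  inf [set v r ord0 | v in pvertices o G] = o r ord0 + \sum_j hn (G r j).
Proof.
apply: inf_min.
  exists (o + G *m \col_j (if 0 <= G r j then 0 else 1)).
    exists (\col_j (if 0 <= G r j then 0 else 1)) => //= j.
    by rewrite mxE; case: ifP => _; [left|right].
  rewrite vert_entry; congr (_ + _); apply: eq_bigr => j _.
  by rewrite mxE /hn; case: ifP => _; rewrite ?mulr1 ?mulr0.
move=> y [v [lam Hlam <-] <-]; rewrite vert_entry lerD2l.
apply: ler_sum => j _; rewrite /hn.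
case: (Hlam j) => ->; rewrite ?mulr0 ?mulr1; case: ifP => //.
by move/negbT; rewrite -ltNge => /ltW.
Qed.

Lemma bbox_rect m (o : 'cV[R]_2) (G : 'M[R]_(2, m)) :
  bbox o G =
  `[o ord0 ord0 + \sum_j hn (G ord0 j), o ord0 ord0 + \sum_j hp (G ord0 j)]%classic `*`
  `[o ord_max ord0 + \sum_j hn (G ord_max j), o ord_max ord0 + \sum_j hp (G ord_max j)]%classic.
Proof.
rewrite /bbox !vert_sup !vert_inf; apply/seteqP; split => p /=; rewrite !in_itv /=;
  by case.
Qed.

Lemma width m (g : 'I_m -> R) : \sum_j hp (g j) - \sum_j hn (g j) = \sum_j `|g j|.
Proof. by rewrite -sumrB; apply: eq_bigr => j _; rewrite hpn. Qed.

Lemma hn_le_hp m (g : 'I_m -> R) : \sum_j hn (g j) <= \sum_j hp (g j).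
Proof. by rewrite -subr_ge0 width; apply: sumr_ge0 => j _. Qed.

Section Main.
Variables (n : nat) (W : 'M[R]_(2, n.+1)) (b : 'cV[R]_2) (c : 'cV[R]_n.+1) (U : 'M[R]_n.+1).

Lemma off_entry (N k : nat) r :
  (W *m cell_off c U N k + b) r ord0 =
  (W *m c + b) r ord0 + k%:R * ((W *m U) r ord0 / N%:R).
Proof.
rewrite /cell_off mulmxDr -scalemxAr !mxE.
have -> : \sum_j W r j * col ord0 U j ord0 = \sum_j W r j * U j ord0.
  by apply: eq_bigr => a _; rewrite mxE.
ring.
Qed.

Lemma gen_entry (N : nat) r j :
  (W *m cell_gen U N) r j = if j == ord0 then (W *m U) r j / N%:R else (W *m U) r j.
Proof.
rewrite !mxE; case: ifP => hj.
  rewrite mulr_suml; apply: eq_bigr => a _; rewrite mxE hj mulrA //.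
by apply: eq_bigr => a _; rewrite mxE hj.
Qed.

Lemma cell_box (N k : nat) :
  bbox (W *m cell_off c U N k + b) (W *m cell_gen U N) =
  box ((W *m c + b) ord0 ord0 + \sum_j hn ((W *m cell_gen U N) ord0 j)) ((W *m U) ord0 ord0 / N%:R)
      (\sum_j hp ((W *m cell_gen U N) ord0 j) - \sum_j hn ((W *m cell_gen U N) ord0 j))
      ((W *m c + b) ord_max ord0 + \sum_j hn ((W *m cell_gen U N) ord_max j)) ((W *m U) ord_max ord0 / N%:R)
      (\sum_j hp ((W *m cell_gen U N) ord_max j) - \sum_j hn ((W *m cell_gen U N) ord_max j)) k.
Proof.
rewrite bbox_rect /box /I1 !off_entry.
congr (_ `*` _); congr ([set` _]).
all: apply: funext => x; f_equal. all: f_equal. all: ring.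
Qed.

Definition Arest r := \sum_(j < n) `|(W *m U) r (lift ord0 j)|.

Lemma wG (N : nat) r : (0 < N)%N ->
  \sum_j hp ((W *m cell_gen U N) r j) - \sum_j hn ((W *m cell_gen U N) r j) =
  `|(W *m U) r ord0| / N%:R + Arest r.
Proof.
move=> N0; rewrite width big_ord_recl gen_entry eqxx normrM normfV normr_nat.
congr (_ + _); apply: eq_bigr => j _; rewrite gen_entry.
by rewrite eq_sym (negbTE (neq_lift _ _)).
Qed.

Lemma wV r : \sum_j hp ((W *m U) r j) - \sum_j hn ((W *m U) r j) =
  `|(W *m U) r ord0| + Arest r.
Proof. by rewrite width big_ord_recl. Qed.

Lemma Arest_ge0 r : 0 <= Arest r.
Proof. by apply: sumr_ge0. Qed.

Lemma Rgap_eq i : Rgap W b c U i =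
  (`|(W *m U) ord0 ord0| * `|(W *m U) ord_max ord0| * (1 - ((2 ^ i)%N%:R)^-1))%:E.
Proof.
rewrite /Rgap.
set N := (2 ^ i)%N.
have N0 : (0 < N)%N by rewrite expn_gt0.
rewrite (eq_bigcupr (G := box _ _ _ _ _ _) (fun k _ => cell_box N k)).
have [N' eN] : exists N', N = N'.+1 by exists N.-1; rewrite prednK.
rewrite eN stair; first last.
- by rewrite wG // normrM normfV normr_nat lerDl Arest_ge0.
- by rewrite wG // normrM normfV normr_nat lerDl Arest_ge0.
rewrite !wG // bbox_rect area_rect; first last.
- by rewrite lerD2l hn_le_hp.
- by rewrite lerD2l hn_le_hp.
have e r x : x + \sum_j hp ((W *m U) r j) - (x + \sum_j hn ((W *m U) r j)) =
    `|(W *m U) r ord0| + Arest r by rewrite -wV; ring.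
rewrite !e !normrM !normfV !normr_nat -EFinB; congr (_%:E).
rewrite -natr1; field.
by rewrite natr1 pnatr_eq0.
Qed.

End Main.
End S.

Lemma rowcol (R : realType) (n : nat) (W : 'M[R]_(2, n.+1)) (U : 'M[R]_n.+1) r :
  (row r W *m col ord0 U) ord0 ord0 = (W *m U) r ord0.
Proof. by rewrite !mxE; apply: eq_bigr => j _; rewrite !mxE. Qed.

Theorem lemma2 (R : realType) (n : nat) (W : 'M[R]_(2, n.+1)) (b : 'cV[R]_2)
  (c : 'cV[R]_n.+1) (U : 'M[R]_n.+1) :
  Rgap W b c U @ \oo -->
    ((`|(row ord0 W *m col ord0 U) ord0 ord0| *
      `|(row ord_max W *m col ord0 U) ord0 ord0|)%:E)%E.
Proof.
rewrite !rowcol.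
set K := `|(W *m U) ord0 ord0| * `|(W *m U) ord_max ord0|.
rewrite (_ : Rgap W b c U = fun i => (K * (1 - ((2 ^ i)%N%:R)^-1))%:E); last first.
  by apply: funext => i; rewrite Rgap_eq.
apply: cvg_EFin; first by apply: nearW.
suff h : ((fun i => K * (1 - ((2 ^ i)%N%:R)^-1)) : R^nat) @ \oo --> K * (1 - 0).
  by rewrite subr0 mulr1 in h.
apply: cvgM; first exact: cvg_cst.
apply: cvgB; first exact: cvg_cst.
under eq_fun do rewrite natrX -exprVn.
apply: cvg_expr.
rewrite gtr0_norm ?invr_gt0 // invf_lt1 //.
by rewrite ltr1n.
Qed.
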